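(* (Poisson case as $\alpha\to0$.) Let $\gamma>0$, $\boldsymbol{z}\in\mathbb{N}^n$ and $\boldsymbol{y}=\gamma\boldsymbol{z}$. For $\alpha\in(0,1)$ let $\boldsymbol{\omega}=(\omega_1,\dots,\omega_n)$ have independent coordinates $\omega_i\sim\mathrm{Bin}(z_i,\alpha)$, and set $\boldsymbol{y}_1=\frac{\boldsymbol{y}-\gamma\boldsymbol{\omega}}{1-\alpha}$ and $\boldsymbol{y}_2=\frac1\alpha\boldsymbol{y}-\frac{1-\alpha}\alpha\boldsymbol{y}_1=\gamma\boldsymbol{\omega}/\alpha$. Let $f:\mathbb{R}^n\to\mathbb{R}^n$ be continuous. Then $$\lim_{\alpha\to0}\Big(\mathbb{E}_{\boldsymbol{\omega}}\|f(\boldsymbol{y}_1)-\boldsymbol{y}_2\|_2^2-\mathbb{E}_{\boldsymbol{\omega}}\|\boldsymbol{y}_2-\boldsymbol{y}\|_2^2\Big)=\|f(\boldsymbol{y})-\boldsymbol{y}\|_2^2+2\sum_{i=1}^n y_i\big(f_i(\boldsymbol{y})-f_i(\boldsymbol{y}-\gamma\boldsymbol{e}_i)\big),$$ where $\boldsymbol{e}_i$ is the $i$-th canonical basis vector of $\mathbb{R}^n$.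
   Context: This is the GR2R re-corruption for the scaled Poisson model $\boldsymbol{y}=\gamma\boldsymbol{z}$, $\boldsymbol{z}\sim\mathcal{P}(\boldsymbol{x}/\gamma)$ (independent Poisson coordinates). The subtracted term $\mathbb{E}_{\boldsymbol{\omega}}\|\boldsymbol{y}_2-\boldsymbol{y}\|_2^2$ does not depend on $f$. *)

(* Defs.v *)
From HB Require Import structures.
From mathcomp Require Import all_boot all_order all_algebra.
From mathcomp Require Import all_classical all_reals all_analysis.
Set Implicit Arguments. Unset Strict Implicit. Unset Printing Implicit Defensive.
Import Order.TTheory GRing.Theory Num.Theory numFieldNormedType.Exports.
Local Open Scope ring_scope.

(* Binomial pmf Bin(m, a) at k : 'C(m,k) a^k (1-a)^(m-k)  (= 0 for k > m). *)
Definition binom_pmf (R : realType) (m : nat) (a : R) (k : nat) : R :=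
  ('C(m, k))%:R * a ^+ k * (1 - a) ^+ (m - k).

(* Expectation of F(omega) when omega has independent coordinates
   omega_i ~ Bin(z_i, a).  omega ranges over all vectors with entries in
   {0, ..., max_i z_i}; the product pmf vanishes unless omega_i <= z_i. *)
Definition E_omega (R : realType) (n : nat) (z : 'I_n -> nat) (a : R)
  (F : ('I_n -> nat) -> R) : R :=
  \sum_(w : {ffun 'I_n -> 'I_((\max_(i < n) z i).+1)})
     (\prod_(i < n) binom_pmf (z i) a (w i)) * F (fun i => nat_of_ord (w i)).

Definition sqnorm (R : realType) (n : nat) (v : 'rV[R]_n) : R :=
  \sum_(i < n) (v 0 i) ^+ 2.

Definition yvec (R : realType) (n : nat) (gamma : R) (z : 'I_n -> nat) : 'rV[R]_n :=
  \row_i (gamma * (z i)%:R).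

Definition y1vec (R : realType) (n : nat) (gamma a : R) (z w : 'I_n -> nat) : 'rV[R]_n :=
  (1 - a)^-1 *: (yvec gamma z - yvec gamma w).

Definition y2vec (R : realType) (n : nat) (gamma a : R) (z w : 'I_n -> nat) : 'rV[R]_n :=
  a^-1 *: yvec gamma z - ((1 - a) / a) *: y1vec gamma a z w.

(* Main.v *)
Require Import Defs.
From HB Require Import structures.
From mathcomp Require Import all_boot all_order all_algebra.
From mathcomp Require Import all_classical all_reals all_analysis.
From mathcomp Require Import ring lra.
Import Order.TTheory GRing.Theory Num.Theory numFieldNormedType.Exports.
Local Open Scope classical_set_scope.
Local Open Scope ring_scope.

Section Helpers.
Context {R : realType} {F : set_system R} {FF : Filter F}.

Lemma cvg_sumF {I : Type} {r : seq I} {g : I -> R -> R} {l : I -> R} :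
  (forall i, g i @ F --> l i) ->
  (fun a => \sum_(i <- r) g i a) @ F --> \sum_(i <- r) l i.
Proof.
move=> H; elim: r => [|x r IH].
  under eq_fun do rewrite big_nil. rewrite big_nil; exact: cvg_cst.
under eq_fun do rewrite big_cons. rewrite big_cons.
exact: (cvgD (H x) IH).
Qed.

Lemma cvg_prodF {I : Type} {r : seq I} {g : I -> R -> R} {l : I -> R} :
  (forall i, g i @ F --> l i) ->
  (fun a => \prod_(i <- r) g i a) @ F --> \prod_(i <- r) l i.
Proof.
move=> H; elim: r => [|x r IH].
  under eq_fun do rewrite big_nil. rewrite big_nil; exact: cvg_cst.
under eq_fun do rewrite big_cons. rewrite big_cons.
exact: (cvgM (H x) IH).
Qed.

Lemma cvg_expF {g : R -> R} {l : R} k : g @ F --> l -> (fun a => g a ^+ k) @ F --> l ^+ k.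
Proof.
move=> H; elim: k => [|k IH].
  under eq_fun do rewrite expr0. rewrite expr0; exact: cvg_cst.
under eq_fun do rewrite exprS. rewrite exprS.
exact: (cvgM H IH).
Qed.
Lemma cvgD' {g h : R -> R} {l1 l2 : R} : g @ F --> l1 -> h @ F --> l2 ->
  (fun a => g a + h a) @ F --> l1 + l2.
Proof. move=> H1 H2; exact: (cvgD H1 H2). Qed.
Lemma cvgB' {g h : R -> R} {l1 l2 : R} : g @ F --> l1 -> h @ F --> l2 ->
  (fun a => g a - h a) @ F --> l1 - l2.
Proof. move=> H1 H2; exact: (cvgB H1 H2). Qed.
End Helpers.

Section Main.
Variables (R : realType) (n : nat) (gamma : R) (z : 'I_n -> nat)
  (f : 'rV[R]_n -> 'rV[R]_n).
Hypothesis fc : continuous f.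

Local Notation M := (\max_(i < n) z i).
Local Notation W := {ffun 'I_n -> 'I_M.+1}.
Local Notation y := (yvec gamma z).

Definition wn (w : W) : 'I_n -> nat := fun i => nat_of_ord (w i).
Definition Pw (a : R) (w : W) := \prod_(i < n) binom_pmf (z i) a (w i).
Definition Qw (a : R) (w : W) (i : 'I_n) :=
  \prod_(j < n) (if j == i then ('C(z j, w j))%:R * (w j)%:R * a ^+ (w j).-1
                                  * (1 - a) ^+ (z j - w j)
                 else binom_pmf (z j) a (w j)).
Definition y1 (a : R) (w : W) := y1vec gamma a z (wn w).
Definition Tw (a : R) (w : W) :=
  Pw a w * (sqnorm (f (y1 a w)) - sqnorm y)
  + 2 * \sum_(i < n) gamma * Qw a w i * (y 0 i - f (y1 a w) 0 i).
Definition G (a : R) := \sum_(w : W) Tw a w.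

Lemma PQ a w i : Pw a w * (w i)%:R = a * Qw a w i.
Proof.
rewrite /Pw /Qw (bigD1 i) //= [in RHS](bigD1 i) //= eqxx.
rewrite [X in _ = _ * (_ * X)](eq_bigr (fun j => binom_pmf (z j) a (w j))); last first.
  by move=> j /negbTE ->.
rewrite /binom_pmf; move: (nat_of_ord (w i)) => k; case: k => [|k] /=.
  by rewrite !(mulr0, mul0r).
rewrite exprS; ring.
Qed.

Lemma cvg_poly (c : R) k j :
  (fun a : R => c * a ^+ k * (1 - a) ^+ j) @ nbhs (0:R) --> c * 0 ^+ k * (1 - 0) ^+ j.
Proof.
apply: (cvgM (f:=(fun a : R => c * a ^+ k)) (g:=(fun a => (1 - a) ^+ j))).
  apply: (cvgM (f:=(fun a : R => c)) (g:=(fun a => a ^+ k))); first exact: cvg_cst.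
  by apply: (cvg_expF (g:=(fun a => a))); exact: cvg_id.
apply: (cvg_expF (g:=(fun a => 1 - a))).
apply: (cvgB' (g:=(fun a : R => 1)) (h:=(fun a => a))); first exact: cvg_cst.
exact: cvg_id.
Qed.

Lemma cvg_Pw w : (fun a => Pw a w) @ nbhs (0:R) --> Pw 0 w.
Proof.
apply: (cvg_prodF (g:=(fun i a => binom_pmf (z i) a (w i)))) => i.
exact: cvg_poly.
Qed.

Lemma cvg_Qw w i : (fun a => Qw a w i) @ nbhs (0:R) --> Qw 0 w i.
Proof.
apply: (cvg_prodF (g:=(fun j a => (if j == i then ('C(z j, w j))%:R * (w j)%:R * a ^+ (w j).-1
                                  * (1 - a) ^+ (z j - w j)
                 else binom_pmf (z j) a (w j))))) => j.
case: (j == i); first exact: cvg_poly.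
exact: cvg_poly.
Qed.

Lemma cvg_y1 w : (fun a => y1 a w) @ nbhs (0:R) --> y1 0 w.
Proof.
rewrite /y1 /y1vec.
apply: (cvgZ (s:=(fun a : R => (1 - a)^-1)) (f:=(fun a => yvec gamma z - yvec gamma (wn w)))).
  apply: (cvgV (f:=(fun a : R => 1 - a))); first by rewrite subr0 oner_neq0.
  apply: (cvgB' (g:=(fun a : R => 1)) (h:=(fun a => a))); first exact: cvg_cst.
  exact: cvg_id.
exact: cvg_cst.
Qed.

Lemma cvg_fy1 w i : (fun a => f (y1 a w) 0 i) @ nbhs (0:R) --> f (y1 0 w) 0 i.
Proof.
apply: (@cvg_comp _ _ _ (fun a => f (y1 a w)) (fun m : 'rV[R]_n => m 0 i)); last first.
  exact: coord_continuous.
apply: (@cvg_comp _ _ _ (fun a => y1 a w) (f)); first exact: cvg_y1.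
exact: fc.
Qed.

Lemma cvg_Tw w : (fun a => Tw a w) @ nbhs (0:R) --> Tw 0 w.
Proof.
rewrite /Tw.
apply: (cvgD' (g:=(fun a => Pw a w * (sqnorm (f (y1 a w)) - sqnorm y))) (h:=(fun a => 2 * \sum_(i < n) gamma * Qw a w i * (y 0 i - f (y1 a w) 0 i)))).
  apply: (cvgM (f:=(fun a => Pw a w)) (g:=(fun a => sqnorm (f (y1 a w)) - sqnorm y))).
    exact: cvg_Pw.
  apply: (cvgB' (g:=(fun a => sqnorm (f (y1 a w)))) (h:=(fun a => sqnorm y))); last exact: cvg_cst.
  rewrite /sqnorm.
  apply: (cvg_sumF (g:=(fun i a => f (y1 a w) 0 i ^+ 2))) => i.
  apply: (cvg_expF (g:=(fun a => f (y1 a w) 0 i))); exact: cvg_fy1.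
apply: (cvgM (f:=(fun a : R => 2)) (g:=(fun a => \sum_(i < n) gamma * Qw a w i * (y 0 i - f (y1 a w) 0 i)))).
  exact: cvg_cst.
apply: (cvg_sumF (g:=(fun i a => gamma * Qw a w i * (y 0 i - f (y1 a w) 0 i)))) => i.
apply: (cvgM (f:=(fun a => gamma * Qw a w i)) (g:=(fun a => y 0 i - f (y1 a w) 0 i))).
  apply: (cvgM (f:=(fun a : R => gamma)) (g:=(fun a => Qw a w i))); first exact: cvg_cst.
  exact: cvg_Qw.
apply: (cvgB' (g:=(fun a : R => y 0 i)) (h:=(fun a => f (y1 a w) 0 i))); first exact: cvg_cst.
exact: cvg_fy1.
Qed.

Lemma cvg_G : G @ nbhs (0:R) --> G 0.
Proof.
apply: (cvg_sumF (g:=(fun w a => Tw a w))) => w; exact: cvg_Tw.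
Qed.

Lemma DG a : 0 < a < 1 ->
  E_omega z a (fun w => sqnorm (f (y1vec gamma a z w) - y2vec gamma a z w))
  - E_omega z a (fun w => sqnorm (y2vec gamma a z w - y)) = G a.
Proof.
case/andP=> a0 a1.
have an0 : a != 0 by rewrite gt_eqF.
have a1n0 : 1 - a != 0 by rewrite subr_eq0 gt_eqF.
rewrite /E_omega /G -sumrB; apply: eq_bigr => w _.
rewrite -mulrBr /Tw.
rewrite -/(wn w) -/(y1 a w).
set fv := f (y1 a w).
rewrite /sqnorm -!sumrB !mulr_sumr -big_split /=; apply: eq_bigr => i _.
have hQ : Qw a w i = a^-1 * (Pw a w * (w i)%:R) by rewrite PQ mulKf.
rewrite hQ /Pw.
rewrite /y2vec /y1vec /yvec !mxE.
rewrite /wn.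
rewrite -/(wn w).
rewrite /wn.
set P := \prod_(i0 < n) _.
field.
by rewrite an0 a1n0.
Qed.

Lemma binom0 m k : binom_pmf m (0:R) k = (k == 0)%:R.
Proof.
rewrite /binom_pmf expr0n subr0 expr1n mulr1; case: k => [|k] /=.
  by rewrite bin0 mul1r.
by rewrite mulr0.
Qed.

Definition w0 : W := [ffun => ord0].

Lemma sumP0 (h : W -> R) : \sum_(w : W) Pw 0 w * h w = h w0.
Proof.
rewrite (bigD1 w0) //= big1 ?addr0.
  rewrite /Pw big1 ?mul1r // => i _; by rewrite binom0 ffunE.
move=> w hw.
case/boolP: [exists i, w i != ord0] => [/existsP[i Hi]|/existsPn H].
  rewrite /Pw (bigD1 i) //= binom0.
  have -> : (nat_of_ord (w i) == 0%N) = false.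
    by apply/negbTE; move: Hi; apply: contra => /eqP h0; apply/eqP/val_inj.
  by rewrite !mul0r.
exfalso; move/eqP: hw; apply; apply/ffunP => i; rewrite ffunE.
by move: (H i); rewrite negbK => /eqP.
Qed.

Definition ei (i : 'I_n) : W := [ffun j => if j == i then inord 1 else ord0].

Lemma sumQ0 i (h : W -> R) : \sum_(w : W) Qw 0 w i * h w = (z i)%:R * h (ei i).
Proof.
have [zi0|zipos] := eqVneq (z i) 0%N.
  rewrite zi0 mul0r big1 // => w _.
  rewrite /Qw (bigD1 i) //= eqxx zi0 bin0n.
  by case: (nat_of_ord (w i)) => [|k] /=; rewrite !(mulr0, mul0r).
have M1 : (1 < M.+1)%N.
  by rewrite ltnS (leq_trans _ (leq_bigmax i)) // lt0n.
have ei_i : nat_of_ord (ei i i) = 1%N by rewrite ffunE eqxx inordK.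
have ei_j j : j != i -> nat_of_ord (ei i j) = 0%N by rewrite ffunE => /negbTE ->.
rewrite (bigD1 (ei i)) //= big1 ?addr0.
  congr (_ * _); rewrite /Qw (bigD1 i) //= eqxx ei_i big1 ?mulr1.
    by rewrite bin1 subr0 expr1n mulr1.
  move=> j hj; rewrite (negbTE hj) binom0 ei_j //.
move=> w hw.
case: (eqVneq (nat_of_ord (w i)) 1%N) => [wi1|wi1].
  case/boolP: [exists j, (j != i) && (w j != ord0)] => [/existsP[j /andP[ji Hj]]|/existsPn H].
    rewrite /Qw (bigD1 j) //= (negbTE ji) binom0.
    have -> : (nat_of_ord (w j) == 0%N) = false.
      by apply/negbTE; move: Hj; apply: contra => /eqP h0; apply/eqP/val_inj.
    by rewrite !mul0r.
  exfalso; move/eqP: hw; apply; apply/ffunP => j; apply/val_inj => /=.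
  have [->|ji] := eqVneq j i; first by rewrite wi1 ei_i.
  rewrite ei_j //; move: (H j); rewrite ji /= negbK => /eqP -> //.
rewrite /Qw (bigD1 i) //= eqxx.
move: wi1; case: (nat_of_ord (w i)) => [|[|k]] //= _; first by rewrite !(mulr0, mul0r).
by rewrite exprS !(mulr0, mul0r).
Qed.

Lemma y1_w0 : y1 0 w0 = y.
Proof.
rewrite /y1 /y1vec subr0 invr1 scale1r.
have -> : yvec gamma (wn w0) = 0.
  by apply/matrixP => a b; rewrite !mxE /wn ffunE mulr0.
by rewrite subr0.
Qed.

Lemma y1_ei i : (0 < z i)%N -> y1 0 (ei i) = y - gamma *: delta_mx 0 i.
Proof.
move=> zipos.
have M1 : (1 < M.+1)%N.
  by rewrite ltnS (leq_trans _ (leq_bigmax i)).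
rewrite /y1 /y1vec subr0 invr1 scale1r; congr (_ - _).
apply/matrixP => a b; rewrite !mxE /wn ffunE [a]ord1 eqxx /=.
by case: (b == i); rewrite ?inordK // mulr1.
Qed.

Lemma G0 : G 0 = sqnorm (f y - y)
  + 2 * \sum_(i < n) y 0 i * (f y 0 i - f (y - gamma *: delta_mx 0 i) 0 i).
Proof.
rewrite /G /Tw big_split /= sumP0 y1_w0 -mulr_sumr exchange_big /=.
have Hi i : \sum_(w : W) gamma * Qw 0 w i * (y 0 i - f (y1 0 w) 0 i)
    = y 0 i * (y 0 i - f (y - gamma *: delta_mx 0 i) 0 i).
  rewrite (eq_bigr (fun w => Qw 0 w i * (gamma * (y 0 i - f (y1 0 w) 0 i)))); last first.
    by move=> w _; rewrite [gamma * _]mulrC -mulrA.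
  rewrite sumQ0.
  have [zi0|zipos] := eqVneq (z i) 0%N.
    by rewrite zi0 [yvec gamma z 0 i]mxE zi0 !(mulr0, mul0r).
  rewrite y1_ei ?lt0n // [yvec gamma z 0 i]mxE; ring.
rewrite (eq_bigr _ (fun i _ => Hi i)).
rewrite /sqnorm -sumrB !mulr_sumr -!big_split /=; apply: eq_bigr => i _.
rewrite !mxE; ring.
Qed.
End Main.

Theorem mainTheorem6 (R : realType) (n : nat) (gamma : R) (z : 'I_n -> nat)
  (f : 'rV[R]_n -> 'rV[R]_n) :
  0 < gamma -> continuous f ->
  (fun a : R =>
     E_omega z a (fun w => sqnorm (f (y1vec gamma a z w) - y2vec gamma a z w))
   - E_omega z a (fun w => sqnorm (y2vec gamma a z w - yvec gamma z)))
  @ 0^'+ -->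
  sqnorm (f (yvec gamma z) - yvec gamma z)
  + 2 * \sum_(i < n) yvec gamma z 0 i *
          (f (yvec gamma z) 0 i - f (yvec gamma z - gamma *: delta_mx 0 i) 0 i).
Proof.
move=> g0 fc.
rewrite -G0.
have h := @cvg_at_right_filter R _ (@G R n gamma z f) 0 (@G R n gamma z f 0) (@cvg_G R n gamma z f fc).
apply: cvg_trans h.
apply: near_eq_cvg; near=> a.
have [a0 a1] : 0 < a /\ a < 1.
  by split; near: a; [exact: nbhs_right_gt | exact: nbhs_right_lt].
by rewrite DG // a0 a1.
Unshelve. all: by end_near.
Qed.
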